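(* Let $(G,\sigma)$ be a finite connected signed graph, $D$ the diameter and $\mathrm{vol}(G)=\sum_{x\in V}d_x$ the volume of $G$. Then for any $p>1$, the first (smallest) nonzero eigenvalue $\lambda_{p}^{\sigma}$ of the signed $p$-Laplacian $\Delta_p^{\sigma}$ satisfies \[ \lambda_{p}^{\sigma}\geq\frac{1}{(D+1)^{p-1}\mathrm{vol}(G)}. \]
   Context: $G=(V,E)$ is a finite simple connected graph with degrees $d_x$; $\sigma:E\to\{\pm1\}$, $\sigma_{xy}=\sigma(\{x,y\})$. For $p>1$, the signed $p$-Laplacian is $\Delta_{p}^{\sigma}f(x)=\frac{1}{d_{x}}\sum_{y\sim x}|\sigma_{xy}f(y)-f(x)|^{p-2}(\sigma_{xy}f(y)-f(x))$, with the convention $|t|^{p-2}t=0$ for $t=0$. A real $\lambda$ is an eigenvalue of $\Delta_p^\sigma$ if there is a nonzero $f:V\to\mathbb{R}$ with $-\Delta_{p}^{\sigma}f(x)=\lambda|f(x)|^{p-2}f(x)$ for all $x\in V$. *)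

(* Defs.v *)
From HB Require Import structures.
From mathcomp Require Import all_boot all_order all_algebra.
From mathcomp Require Import reals exp.
Set Implicit Arguments. Unset Strict Implicit. Unset Printing Implicit Defensive.
Import Order.TTheory GRing.Theory Num.Theory.
Local Open Scope ring_scope.

Section SignedPLaplacian.
Variables (T : finType) (e : rel T).

Definition simple_graph := symmetric e /\ irreflexive e.
Definition connected_graph := forall x y : T, connect e x y.

Definition deg (x : T) : nat := #|[set y | e x y]|.

Fixpoint walkn (n : nat) (x y : T) : bool :=
  if n is n'.+1 then [exists z, e x z && walkn n' z y] else x == y.

(* graph distance: least n such that a walk of length n from x to y exists
   (in a connected graph such an n is < #|T|) *)
Definition gdist (x y : T) : nat := find (fun n => walkn n x y) (iota 0 #|T|).

Definition diameter : nat := \max_(x : T) \max_(y : T) gdist x y.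

Variable R : realType.

Definition vol : R := \sum_(x : T) (deg x)%:R.

Definition signature (sigma : T -> T -> R) :=
  forall x y, e x y -> sigma x y = sigma y x /\ (sigma x y = 1 \/ sigma x y = -1).

Definition phi_p (p t : R) : R := if t == 0 then 0 else powR `|t| (p - 2) * t.

Definition signed_pLap (p : R) (sigma : T -> T -> R) (f : T -> R) (x : T) : R :=
  (deg x)%:R^-1 * \sum_(y | e x y) phi_p p (sigma x y * f y - f x).

Definition is_eigenvalue (p : R) (sigma : T -> T -> R) (lam : R) : Prop :=
  exists f : T -> R, (exists x, f x != 0) /\
    forall x, - signed_pLap p sigma f x = lam * phi_p p (f x).

End SignedPLaplacian.

(* Main.v *)
Require Import Defs.
From HB Require Import structures.
From mathcomp Require Import all_boot all_order all_algebra.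
From mathcomp Require Import reals exp.
From mathcomp Require Import ring lra interval_inference classical_sets convex hoelder.
Import Order.TTheory GRing.Theory Num.Theory.
Local Open Scope ring_scope.

Lemma power_mean (R : realType) (p : R) (X : Type) (s : seq X) (a : X -> R) :
  1 <= p -> (forall x, 0 <= a x) ->
  powR (\sum_(x <- s) a x) p <= powR (size s)%:R (p - 1) * \sum_(x <- s) powR (a x) p.
Proof.
move=> p1 a0; have p0 : 0 < p by apply: lt_le_trans p1.
elim: s => [|x s IH].
  by rewrite !big_nil powR0 ?gt_eqF // mulr0.
case: s IH => [|y s] IH.
  by rewrite !big_cons !big_nil /= !addr0 powR1 mul1r.
rewrite big_cons [X in _ <= _ * X]big_cons.
move: IH; set l := y :: s; set k := size l.
have -> : size (x :: l) = k.+1 by [].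
set S := \sum_(z <- l) a z; set S' := \sum_(z <- l) powR (a z) p.
have S0 : 0 <= S by rewrite /S sumr_ge0.
have S'0 : 0 <= S' by rewrite /S' sumr_ge0 // => i _; apply: powR_ge0.
have k0 : (0 < k%:R :> R) by rewrite ltr0n.
set v := S / k%:R.
have Sv : S = k%:R * v by rewrite /v mulrC divfK // gt_eqF.
have v0 : 0 <= v by rewrite /v divr_ge0 // ltW.
move=> IH.
have kv : k%:R * powR v p <= S'.
  move: IH; rewrite Sv powRM ?(ltW k0) // -(mulr_powRB1 (ltW k0) p0).
  by rewrite mulrAC [X in X <= _]mulrC ler_pM2l // powR_gt0.
set A := a x.
have A0 : 0 <= A by apply: a0.
have k10 : (0 < k.+1%:R :> R) by rewrite ltr0n.
have t0 : 0 <= (k.+1%:R)^-1 :> R by rewrite invr_ge0 ltW.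
have t1 : (k.+1%:R)^-1 <= 1 :> R by rewrite invf_le1 // ler1n.
have := convex_powR p1 (Itv01 t0 t1).
move=> /(_ A v); rewrite !inE /= !in_itv /= !andbT => /(_ A0 v0).
rewrite !convRE /=.
set t := (k.+1%:R)^-1.
set u := (X in X `^ p <= _ -> _).
have ue : u = t * A + (1 - t) * v by [].
rewrite -[unstable.onem t]/(1 - t).
have Eu : A + S = k.+1%:R * u.
  rewrite ue Sv /t; move: k10; rewrite -addn1 natrD => k10.
  by field; rewrite gt_eqF.

move=> Hc.
have u0 : 0 <= u.
  by rewrite ue addr_ge0 // mulr_ge0 // subr_ge0.
rewrite Eu powRM ?(ltW k10) // -(mulr_powRB1 (ltW k10) p0) mulrAC [X in X <= _]mulrC ler_pM2l ?powR_gt0 //.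
apply: (le_trans (ler_wpM2l (ltW k10) Hc)).
have -> : k.+1%:R * (t * A `^ p + (1 - t) * v `^ p) = A `^ p + k%:R * v `^ p.
  rewrite /t; move: k10; rewrite -addn1 natrD => k10.
  by field; rewrite gt_eqF.
by rewrite lerD2l.
Qed.

Section Graph.
Local Open Scope nat_scope.
Set Implicit Arguments. Unset Strict Implicit.
Lemma walkn_path (T : finType) (e : rel T) x (p : seq T) :
  path e x p -> walkn e (size p) x (last x p).
Proof.
elim: p x => [|y p IH] x /=; first by [].
move=> /andP[exy pp]; apply/existsP; exists y; rewrite exy /=.
exact: IH.
Qed.

Lemma exists_walk (T : finType) (e : rel T) x y :
  connect e x y -> exists2 n, n < #|T| & walkn e n x y.
Proof.
move=> /connectP[p pp ->].
case: (shortenP pp) => p' pp' up' _.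
exists (size p'); last exact: walkn_path.
move/card_uniqP: up' => /= hs.
by rewrite -hs; apply: max_card.
Qed.

Lemma gdist_walk (T : finType) (e : rel T) x y :
  connect e x y -> walkn e (gdist e x y) x y.
Proof.
move=> /exists_walk[n ltn w].
have hf : has (fun n => walkn e n x y) (iota 0 #|T|).
  by apply/hasP; exists n => //; rewrite mem_iota.
have hl := hf; rewrite has_find size_iota in hl.
by have := nth_find 0 hf; rewrite nth_iota.
Qed.

Lemma gdist_le (T : finType) (e : rel T) x y n :
  walkn e n x y -> gdist e x y <= n.
Proof.
move=> w; rewrite /gdist.
case: (ltnP n #|T|) => hn; last first.
  by apply: leq_trans (find_size _ _) _; rewrite size_iota.
rewrite leqNgt; apply/negP => /(before_find 0).
by rewrite nth_iota // w.
Qed.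

Lemma gdist_pred (T : finType) (e : rel T) y x0 k :
  connected_graph e -> gdist e y x0 = k.+1 ->
  exists2 z, e y z & gdist e z x0 = k.
Proof.
move=> hc hd; have := gdist_walk (hc y x0); rewrite hd /=.
move=> /existsP[z /andP[eyz w]]; exists z => //.
apply/eqP; rewrite eqn_leq gdist_le //=.
rewrite leqNgt; apply/negP => hlt.
have w' : walkn e (gdist e z x0).+1 y x0.
  by apply/existsP; exists z; rewrite eyz; apply: gdist_walk; apply: hc.
by have := gdist_le w'; rewrite hd ltnS leqNgt hlt.
Qed.

Lemma gdist_diam (T : finType) (e : rel T) x y : gdist e x y <= diameter e.
Proof.
rewrite /diameter.
have h1 := @bigop.leq_bigmax T (fun y => gdist e x y) y.
have h2 := @bigop.leq_bigmax T (fun x => \max_y gdist e x y) x.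
exact: leq_trans h1 h2.
Qed.

End Graph.

Lemma half_sum (R : realType) (T : finType) (e : rel T) (w : T -> T -> R)
    (Q : seq (T * T)) :
  symmetric e -> (forall x y, e x y -> w y x = w x y) -> (forall x y, 0 <= w x y) ->
  uniq Q -> (forall q, q \in Q -> e q.1 q.2) ->
  (forall q, q \in Q -> (q.2, q.1) \notin Q) ->
  2 * \sum_(q <- Q) w q.1 q.2 <= \sum_x \sum_(y | e x y) w x y.
Proof.
move=> esym wsym w0 uQ hQe hQa.
set L := Q ++ map (fun q => (q.2, q.1)) Q.
have hL : \sum_(q <- L) w q.1 q.2 = 2 * \sum_(q <- Q) w q.1 q.2.
  rewrite big_cat big_map /=.
  have -> : \sum_(q <- Q) w q.2 q.1 = \sum_(q <- Q) w q.1 q.2.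
    by apply: eq_big_seq => q hq; apply: wsym; apply: hQe.
  ring.
have uL : uniq L.
  rewrite cat_uniq uQ /=; apply/andP; split.
    apply/hasPn => q /mapP [q' hq' ->]; exact: hQa.
  by rewrite map_inj_uniq // => -[a b] [c d] /= [-> ->].
have hLe : forall q, q \in L -> e q.1 q.2.
  move=> q; rewrite mem_cat => /orP[/hQe //|/mapP [q' hq' ->] /=].
  by rewrite esym; apply: hQe.
rewrite -hL (big_uniq _ uL) /=.
under [X in _ <= X]eq_bigr do rewrite big_mkcond /=.
rewrite pair_big /= big_mkcond /=.
apply: ler_sum => q _.
case: ifP => hq; case: ifP => he //.
  by rewrite (hLe q hq) in he.
Qed.

Section Main.
Set Implicit Arguments. Unset Strict Implicit.
Variables (R : realType) (T : finType) (e : rel T) (sigma : T -> T -> R) (p : R).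
Hypotheses (esym : symmetric e) (eirr : irreflexive e) (econ : connected_graph e)
  (hsig : signature e sigma) (p1 : 1 < p).
Variables (lam : R) (f : T -> R).
Hypothesis Heq : forall x, - signed_pLap e p sigma f x = lam * phi_p p (f x).

Local Notation t x y := (sigma x y * f y - f x).

Lemma sig_pm x y : e x y -> sigma x y = 1 \/ sigma x y = -1.
Proof. by move=> /hsig[]. Qed.

Lemma sig_sym x y : e x y -> sigma y x = sigma x y.
Proof. by move=> /hsig[]. Qed.

Lemma phi_scale c u : c = 1 \/ c = -1 -> phi_p p (c * u) = c * phi_p p u.
Proof.
rewrite /phi_p => hc.
have hc0 : c != 0 by case: hc => ->; rewrite ?oppr_eq0 oner_eq0.
rewrite mulf_eq0 (negbTE hc0) /=.
case: eqP => _; first by rewrite mulr0.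
have -> : `|c * u| = `|u| by rewrite normrM; case: hc => ->; rewrite ?normrN normr1 mul1r.
by rewrite mulrCA.
Qed.

Lemma phi_mul u : phi_p p u * u = powR `|u| p.
Proof.
rewrite /phi_p; case: eqP => [->|/eqP u0].
  by rewrite mul0r normr0 powR0 // gt_eqF // (lt_trans ltr01 p1).
rewrite -mulrA -expr2 -real_normK ?num_real // -[X in _ * X]powR_mulrn ?normr_ge0 //.
by rewrite -powRD ?normr_eq0 ?u0 ?implybT // subrK.
Qed.

Lemma phi_sg u : phi_p p u * Num.sg u = powR `|u| (p - 2) * `|u|.
Proof.
rewrite /phi_p; case: eqP => [->|/eqP u0]; first by rewrite normr0 !mul0r mulr0.
by rewrite -mulrA [u * _]mulrC -normrEsg.
Qed.

Lemma phi_sg_ge0 u : 0 <= phi_p p u * Num.sg u.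
Proof. by rewrite phi_sg mulr_ge0 // powR_ge0. Qed.

Lemma phi_sg_gt0 u : u != 0 -> 0 < phi_p p u * Num.sg u.
Proof. by move=> u0; rewrite phi_sg mulr_gt0 ?normr_gt0 // powR_gt0 // normr_gt0. Qed.

Lemma t_swap x y : e x y -> t y x = - sigma x y * t x y.
Proof.
move=> exy; rewrite sig_sym //; case: (sig_pm exy) => ->; ring.
Qed.

Lemma normt_swap x y : e x y -> `|t y x| = `|t x y|.
Proof.
move=> exy; rewrite t_swap // normrM normrN.
by case: (sig_pm exy) => ->; rewrite ?normrN normr1 !mul1r.
Qed.

Lemma vertex_id (g : T -> R) x :
  \sum_(y | e x y) - phi_p p (t x y) * g x = lam * (deg e x)%:R * phi_p p (f x) * g x.
Proof.
have := Heq x; rewrite /signed_pLap.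
have [d0|d0] := eqVneq (deg e x) 0%N.
  move=> _; rewrite d0 mulr0 !mul0r big_pred0 // => y.
  move: d0; rewrite /deg => /eqP; rewrite cards_eq0 => /eqP /setP /(_ y).
  by rewrite !inE.
rewrite -big_distrl /= -mulrA => h.
have dn : (deg e x)%:R != 0 :> R by rewrite pnatr_eq0.
have -> : lam * (deg e x)%:R * (phi_p p (f x) * g x) =
  (deg e x)%:R * (lam * phi_p p (f x)) * g x by ring.
by rewrite -h mulrN mulrA mulfV // mul1r sumrN.
Qed.

Lemma swap_sum (F : T -> T -> R) :
  \sum_x \sum_(y | e x y) F x y = \sum_x \sum_(y | e x y) F y x.
Proof.
under eq_bigr do rewrite big_mkcond /=.
rewrite exchange_big /=.
apply: eq_bigr => x _; rewrite big_mkcond /=.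
by rewrite [RHS]big_mkcond; apply: eq_bigr => y _; rewrite esym.
Qed.

Lemma key_id (g : T -> R) :
  \sum_x \sum_(y | e x y) - phi_p p (t x y) * g x =
  lam * \sum_x (deg e x)%:R * (phi_p p (f x) * g x).
Proof.
rewrite big_distrr /=; apply: eq_bigr => x _.
by rewrite vertex_id !mulrA.
Qed.

Lemma key_swap (g : T -> R) :
  \sum_x \sum_(y | e x y) - phi_p p (t x y) * g x =
  \sum_x \sum_(y | e x y) sigma x y * phi_p p (t x y) * g y.
Proof.
rewrite swap_sum; apply: eq_bigr => x _; apply: eq_bigr => y exy.
rewrite t_swap // phi_scale; last first.
  by case: (sig_pm exy) => ->; [right|left]; rewrite ?opprK.
by rewrite !mulNr opprK.
Qed.

Lemma energy :
  \sum_x \sum_(y | e x y) powR `|t x y| p =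
  2 * lam * \sum_x (deg e x)%:R * powR `|f x| p.
Proof.
have h1 := key_id f; rewrite key_swap in h1.
have h2 := key_id f.
have -> : \sum_x \sum_(y | e x y) powR `|t x y| p =
  \sum_x \sum_(y | e x y) sigma x y * phi_p p (t x y) * f y +
  \sum_x \sum_(y | e x y) - phi_p p (t x y) * f x.
  rewrite -big_split /=; apply: eq_bigr => x _; rewrite -big_split /=.
  by apply: eq_bigr => y _; rewrite -phi_mul; ring.
have hAB : \sum_x (deg e x)%:R * (phi_p p (f x) * f x) =
  \sum_x (deg e x)%:R * powR `|f x| p by apply: eq_bigr => x _; rewrite phi_mul.
rewrite h1 h2 hAB; ring.
Qed.

Lemma sign_zero :
  (forall x y, e x y -> 0 < sigma x y * f x * f y) ->
  lam * \sum_x (deg e x)%:R * (phi_p p (f x) * Num.sg (f x)) = 0.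
Proof.
move=> hpos.
have hs : forall x y, e x y -> sigma x y * Num.sg (f y) = Num.sg (f x).
  move=> x y exy; have := hpos x y exy.
  have fx0 : f x != 0.
    by apply/eqP => h; move: (hpos x y exy); rewrite h mulr0 mul0r ltxx.
  move=> /gtr0_sg; rewrite !sgrM => h.
  have sx2 : Num.sg (f x) * Num.sg (f x) = 1 by rewrite -expr2 sqr_sg fx0.
  have ss : Num.sg (sigma x y) = sigma x y.
    by case: (sig_pm exy) => ->; rewrite ?sgrN sgr1.
  rewrite ss in h.
  transitivity (sigma x y * Num.sg (f y) * (Num.sg (f x) * Num.sg (f x))).
    by rewrite sx2 mulr1.
  by rewrite -[RHS]mulr1 -h; ring.
rewrite -key_id.
have h := key_swap (fun x => Num.sg (f x)).
have h' : \sum_x \sum_(y | e x y) sigma x y * phi_p p (t x y) * Num.sg (f y) =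
  - \sum_x \sum_(y | e x y) - phi_p p (t x y) * Num.sg (f x).
  rewrite -sumrN; apply: eq_bigr => x _; rewrite -sumrN; apply: eq_bigr => y exy.
  by rewrite -mulrA mulrCA hs // mulNr opprK.
rewrite h' in h.
set S := \sum_x _ in h *.
by move: h; lra.
Qed.


Lemma lift s y z : e y z -> s = 1 \/ s = -1 ->
  s * f z - `|t y z| <= s * sigma y z * f y.
Proof.
move=> eyz hs; have h1 := ler_norm (t y z); have h2 := ler_norm (- t y z).
rewrite normrN in h2.
case: hs => ->; case: (sig_pm eyz) => hs'; rewrite hs' in h1 h2 *; lra.
Qed.

Section Inner.
Variables (x0 : T).
Let M := `|f x0|.
Let D := diameter e.
Let K := powR (D.+1)%:R (p - 1).
Let W := \sum_x \sum_(y | e x y) powR `|t x y| p.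
Hypothesis hW : K * (W / 2) < powR M p.
Hypothesis f0 : f x0 != 0.

Lemma claim k y : gdist e y x0 = k ->
  exists s, exists P : seq (T * T),
  [/\ s = 1 \/ s = -1, uniq P, size P = k,
    (forall q, q \in P -> [/\ e q.1 q.2, gdist e q.1 x0 = (gdist e q.2 x0).+1 &
       (gdist e q.1 x0 <= k)%N]) &
    M - \sum_(q <- P) `|t q.1 q.2| <= s * f y].
Proof.
elim: k y => [|k IH] y hy.
  have : walkn e 0 y x0 by rewrite -hy; apply: gdist_walk; apply: econ.
  move=> /= /eqP ->.
  exists (Num.sg (f x0)), [::]; split => //.
  - case: (ltgtP (f x0) 0) => h; first by right; rewrite ltr0_sg.
      by left; rewrite gtr0_sg.
    by move: f0; rewrite h eqxx.
  - by rewrite big_nil subr0 /M -normrEsg.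
case: (gdist_pred econ hy) => z eyz hz.
case: (IH z hz) => s [P [hs uP sP hP hM]].
exists (s * sigma y z), ((y, z) :: P); split.
- case: hs => ->; case: (sig_pm eyz) => ->; rewrite ?mul1r ?mulN1r ?opprK;
    by [left | right].
- rewrite cons_uniq uP andbT; apply/negP => /hP [_ _] /=.
  by rewrite hy ltnn.
- by rewrite /= sP.
- move=> q; rewrite in_cons => /orP[/eqP -> /= | /hP [a b c]].
    by split => //; rewrite hy ?hz.
  by split => //; apply: leqW.
- rewrite big_cons /=.
  have := lift eyz hs; lra.
Qed.

Lemma edge z y : e z y -> (gdist e y x0 <= gdist e z x0)%N ->
  0 < sigma z y * f z * f y.
Proof.
move=> ezy hle.
case: (claim (erefl (gdist e y x0))) => s [P [hs uP sP hP hM]].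
set Q := (z, y) :: P.
have p0 : 0 < p by apply: lt_trans p1.
have hQ : \sum_(q <- Q) `|t q.1 q.2| < M.
  have uQ : uniq Q.
    rewrite /Q cons_uniq uP andbT; apply/negP => /hP [_ /= h1 h2].
    by move: h2; rewrite h1 ltnn.
  have hQe : forall q, q \in Q -> e q.1 q.2.
    by move=> q; rewrite in_cons => /orP[/eqP -> //| /hP []].
  have hQa : forall q, q \in Q -> (q.2, q.1) \notin Q.
    move=> q; rewrite !in_cons => /orP[/eqP -> /= | hq].
      apply/negP => /orP[/eqP [hyz _]|/hP [_ /= h1 _]].
        by rewrite hyz eirr in ezy.
      by move: hle; rewrite h1 ltnn.
    have [_ h1 _] := hP q hq.
    apply/negP => /orP[/eqP [hv hu]|/hP [_ /= h2 _]].
      by move: hle; rewrite -hv -hu h1 ltnn.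
    by move: h1; rewrite h2 => /eqP; rewrite -addn2 -{1}(addn0 (gdist _ _ _)) eqn_add2l.
  have hs2 := @half_sum R T e (fun x y => powR `|t x y| p) Q esym
    (fun x y exy => congr1 (fun u => powR u p) (normt_swap exy))
    (fun x y => powR_ge0 _ _) uQ hQe hQa.
  have hpm := @power_mean R p _ Q (fun q => `|t q.1 q.2|) (ltW p1) (fun q => normr_ge0 _).
  have hsz : powR (size Q)%:R (p - 1) <= K.
    apply: ge0_ler_powR; first by rewrite subr_ge0 ltW.
    1,2: by rewrite nnegrE ler0n.
    rewrite ler_nat /Q /= sP ltnS; exact: gdist_diam.
  have hQ2 : \sum_(q <- Q) powR `|t q.1 q.2| p <= W / 2.
    by rewrite ler_pdivlMr // mulrC.
  have hlt : powR (\sum_(q <- Q) `|t q.1 q.2|) p < powR M p.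
    apply: le_lt_trans hpm _; apply: le_lt_trans hW.
    apply: le_trans (ler_wpM2r _ hsz) _.
      by rewrite sumr_ge0 // => q _; apply: powR_ge0.
    by rewrite ler_wpM2l // ltW // powR_gt0 // ltr0n.
  rewrite ltNge; apply/negP => hge.
  have := ge0_ler_powR (ltW p0) _ _ hge.
  rewrite !nnegrE normr_ge0 sumr_ge0 // => /(_ isT isT) h.
  by move: hlt; rewrite ltNge h.
have hQs : \sum_(q <- Q) `|t q.1 q.2| = `|t z y| + \sum_(q <- P) `|t q.1 q.2|.
  by rewrite big_cons.
have A : 0 < s * f y.
  have : 0 <= `|t z y| by [].
  lra.
have B : 0 < s * sigma z y * f z.
  have := lift ezy hs; lra.
have -> : sigma z y * f z * f y = (s * f y) * (s * sigma z y * f z).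
  by case: hs => ->; ring.
exact: mulr_gt0.
Qed.

Lemma all_edges x y : e x y -> 0 < sigma x y * f x * f y.
Proof.
move=> exy; case: (leqP (gdist e y x0) (gdist e x x0)) => h.
  exact: edge.
have eyx : e y x by rewrite esym.
have := edge eyx (ltnW h).
by rewrite sig_sym // mulrAC.
Qed.

End Inner.

Lemma main_bound (x1 : T) : f x1 != 0 -> lam != 0 ->
  1 / (powR ((diameter e).+1)%:R (p - 1) * vol e R) <= lam.
Proof.
move=> fx1 lam0.
have p0 : 0 < p by apply: lt_trans p1.
have [x0 hmax] : exists x0, forall x, `|f x| <= `|f x0|.
  by case: (@arg_maxP _ _ T x1 xpredT (fun x => `|f x|) isT) => x0 _ h; exists x0 => x; exact: h.
have f0 : f x0 != 0.
  by rewrite -normr_gt0 (lt_le_trans _ (hmax x1)) // normr_gt0.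
set M := `|f x0|.
have M0 : 0 < M by rewrite normr_gt0.
set D := diameter e.
set K := powR (D.+1)%:R (p - 1).
have K0 : 0 < K by rewrite powR_gt0 // ltr0n.
rewrite leNgt; apply/negP => Hlt.
set W := \sum_x \sum_(y | e x y) powR `|t x y| p.
have hW : K * (W / 2) < powR M p.
  rewrite /W energy //.
  set Sd := \sum_x _.
  have -> : 2 * lam * Sd / 2 = lam * Sd by field.
  have Sd0 : 0 <= Sd by rewrite sumr_ge0 // => x _; rewrite mulr_ge0 ?ler0n ?powR_ge0.
  have SdM : Sd <= vol e R * powR M p.
    rewrite /vol big_distrl /=; apply: ler_sum => x _.
    rewrite ler_wpM2l ?ler0n //; apply: ge0_ler_powR; rewrite ?nnegrE ?normr_ge0 ?(ltW p0) //; exact: hmax.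
  have vol0 : 0 <= vol e R by rewrite sumr_ge0 // => x _; rewrite ler0n.
  have Mp0 : 0 < powR M p by rewrite powR_gt0.
  case: (lerP lam 0) => hl.
    apply: (le_lt_trans _ Mp0); rewrite mulr_ge0_le0 ?(ltW K0) //.
    by rewrite mulr_le0_ge0.
  have Kv : 0 < K * vol e R.
    rewrite lt_neqAle mulr_ge0 ?(ltW K0) // andbT; apply/negP => /eqP h.
    by move: Hlt; rewrite -h invr0 mulr0; move=> h'; move: (lt_trans hl h'); rewrite ltxx.
  have hl2 : lam * (K * vol e R) < 1.
    by move: Hlt; rewrite -ltr_pdivlMr // div1r.
  apply: (le_lt_trans (y := K * lam * vol e R * powR M p)).
    by rewrite -!mulrA ler_wpM2l ?(ltW K0) // ler_wpM2l ?(ltW hl).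
  by rewrite -[X in _ < X]mul1r ltr_pM2r // mulrAC mulrC.
have hall := all_edges hW f0.
have hz := sign_zero hall.
have hS : \sum_x (deg e x)%:R * (phi_p p (f x) * Num.sg (f x)) = 0.
  by move/eqP: hz; rewrite mulf_eq0 (negbTE lam0) => /eqP.
have hd := psumr_eq0P (fun x _ => mulr_ge0 (ler0n _ _) (phi_sg_ge0 (f x))) hS (i := x0) isT.
have dx0 : deg e x0 = 0%N.
  move/eqP: hd; rewrite mulf_eq0 pnatr_eq0 => /orP[/eqP //|].
  by rewrite gt_eqF // phi_sg_gt0.
have := Heq x0; rewrite /signed_pLap dx0 invr0 mul0r oppr0 => h0.
have /eqP : lam * phi_p p (f x0) = 0 by rewrite -h0.
rewrite mulf_eq0 (negbTE lam0) /= => /eqP hphi.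
by move: (phi_sg_gt0 f0); rewrite hphi mul0r ltxx.
Qed.

End Main.

Theorem theorem4p2 (R : realType) (T : finType) (e : rel T)
  (sigma : T -> T -> R) (p : R) :
  simple_graph e -> connected_graph e -> signature e sigma -> 1 < p ->
  forall lam : R, is_eigenvalue e p sigma lam -> lam != 0 ->
    1 / (powR ((diameter e).+1)%:R (p - 1) * vol e R) <= lam.
Proof.
move=> [esym eirr] econ hsig p1 lam [f [[x1 hx1] Heq]] lam0.
exact: (main_bound esym eirr econ hsig p1 Heq hx1 lam0).
Qed.
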